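(* Fix a real number $\theta>0$ with $\theta\neq 1$ and an integer $N\ge 1$. Choose $\pi\in\mathfrak{S}_N$ at random with probability \[ f(\pi)=\frac{\theta^{\pi^{-1}(N)-1}}{\sum_{\sigma\in\mathfrak{S}_N}\theta^{\sigma^{-1}(N)-1}}. \] Then the probability that the $r$-positional strategy wins (i.e. that $\pi$ is $r$-winnable) is \[ P_r(N,\theta)=\frac{r(1-\theta)\sum_{i=r}^{N-1}\frac{\theta^i}{i}}{1-\theta^N} \] for $1\le r\le N-1$, and is $\frac{1-\theta}{1-\theta^N}$ for $r=0$.
   Context: $\mathfrak{S}_N$ is the set of permutations $\pi=[\pi_1\pi_2\cdots\pi_N]$ of $\{1,\dots,N\}$ in one-line notation; $\pi^{-1}(N)$ is the position of the entry $N$. A left-to-right maximum of $\pi$ is an entry $\pi_j$ larger than every $\pi_i$ with $i<j$. For $r\ge 0$, the $r$-positional strategy rejects $\pi_1,\dots,\pi_r$ and then accepts the first subsequent left-to-right maximum (so for $r=0$ it accepts $\pi_1$); it wins if the accepted entry is $N$, and $\pi$ is then called $r$-winnable. *)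

(* Defs.v *)
From HB Require Import structures.
From mathcomp Require Import all_boot all_order all_algebra all_fingroup.
Set Implicit Arguments. Unset Strict Implicit. Unset Printing Implicit Defensive.
Import Order.TTheory GRing.Theory Num.Theory.

(* Conventions: a permutation of {1..N} is pi : 'S_N acting on 'I_N = {0..N-1};
   entry value v : 'I_N stands for v+1, position j : 'I_N stands for j+1. *)

Definition ltr_max (N : nat) (pi : 'S_N) (j : 'I_N) : bool :=
  [forall i : 'I_N, (i < j)%N ==> (pi i < pi j)%N].

(* The r-positional strategy rejects positions 0..r-1 (i.e. pi_1..pi_r) and
   accepts the first subsequent left-to-right maximum; it wins iff the
   accepted entry is the largest entry N (0-based value N-1). *)
Definition r_winnable (N r : nat) (pi : 'S_N) : bool :=
  [exists j : 'I_N,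
    [&& (r <= j)%N, ltr_max pi j,
        [forall k : 'I_N, ((r <= k)%N && (k < j)%N) ==> ~~ ltr_max pi k]
      & (val (pi j) == N.-1)]].

Local Open Scope ring_scope.

(* theta^(pi^{-1}(N) - 1), N = n.+1, largest entry = ord_max *)
Definition weight (R : ringType) (theta : R) (n : nat) (pi : 'S_n.+1) : R :=
  theta ^+ (nat_of_ord ((pi^-1)%g ord_max)).

Definition fprob (R : fieldType) (theta : R) (n : nat) (pi : 'S_n.+1) : R :=
  weight theta pi / \sum_(s : 'S_n.+1) weight theta s.

Definition win_prob (R : fieldType) (theta : R) (n r : nat) : R :=
  \sum_(pi : 'S_n.+1 | r_winnable r pi) fprob theta pi.

(* Main.v *)
Require Import Defs.
From HB Require Import structures.
From mathcomp Require Import all_boot all_order all_algebra all_fingroup.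
From mathcomp Require Import ring.
Import Order.TTheory GRing.Theory Num.Theory.
Set Implicit Arguments. Unset Strict Implicit. Unset Printing Implicit Defensive.

Definition cnt n (P : pred 'S_n.+1) : nat := \sum_(pi : 'S_n.+1) (P pi : nat).
Definition Bj n (j : 'I_n.+1) (pi : 'S_n.+1) : bool := pi j == ord_max.
Definition Aj n (j m : 'I_n.+1) (pi : 'S_n.+1) : bool :=
  [&& (m < j)%N, pi j == ord_max &
      [forall i : 'I_n.+1, ((i < j)%N && (i != m)) ==> (pi i < pi m)%N]].
Definition am n (j : 'I_n.+1) (pi : 'S_n.+1) : 'I_n.+1 :=
  [arg max_(i > (ord0 : 'I_n.+1) | (i < j)%N) pi i].

Lemma L1 n (j1 j2 : 'I_n.+1) : cnt (Bj j1) = cnt (Bj j2).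
Proof.
rewrite /cnt (reindex_inj (mulgI (tperm j1 j2))); apply: eq_bigr => pi _.
by rewrite /Bj permM tpermL.
Qed.

Lemma Aimp n (j m1 m2 : 'I_n.+1) pi : (m1 < j)%N -> Aj j m2 pi ->
  Aj j m1 (tperm m1 m2 * pi)%g.
Proof.
move=> h1 /and3P[h2 hj /forallP H].
apply/and3P; split => //.
  rewrite permM tpermD //; apply/eqP => e.
    by move: h1; rewrite e ltnn.
  by move: h2; rewrite e ltnn.
apply/forallP => i; apply/implyP => /andP[hi hne]; rewrite !permM tpermL.
case: tpermP => [e|e|ne1 ne2].
- by rewrite e eqxx in hne.
- have := H m1; rewrite h1 /=.
  have -> : m1 != m2 by rewrite -e eq_sym.
  by [].
- have := H i; rewrite hi /=.
  have -> : i != m2 by apply/eqP.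
  by [].
Qed.

Lemma Aeq n (j m1 m2 : 'I_n.+1) pi : (m1 < j)%N -> (m2 < j)%N ->
  Aj j m1 (tperm m1 m2 * pi)%g = Aj j m2 pi.
Proof.
move=> h1 h2; apply/idP/idP; last exact: Aimp.
move/(Aimp h2).
by rewrite mulgA [tperm m2 m1]tpermC tperm2 mul1g.
Qed.

Lemma L2 n (j m1 m2 : 'I_n.+1) : (m1 < j)%N -> (m2 < j)%N ->
  cnt (Aj j m1) = cnt (Aj j m2).
Proof.
move=> h1 h2.
rewrite /cnt (reindex_inj (mulgI (tperm m1 m2))); apply: eq_bigr => pi _.
by rewrite /= Aeq.
Qed.

Lemma am_spec n (j : 'I_n.+1) pi : (0 < j)%N -> Bj j pi -> Aj j (am j pi) pi.
Proof.
move=> j0 hb; rewrite /am.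
case: (@arg_maxnP _ (ord0 : 'I_n.+1) (fun i : 'I_n.+1 => (i < j)%N) (fun i => nat_of_ord (pi i)) j0) => m hm H.
apply/and3P; split => //.
apply/forallP => i; apply/implyP => /andP[hi hne].
have le : (pi i <= pi m)%N by exact: (H i hi).
by rewrite ltn_neqAle le andbT val_eqE (inj_eq perm_inj).
Qed.

Lemma A_uniq n (j m m' : 'I_n.+1) pi : Aj j m pi -> Aj j m' pi -> m = m'.
Proof.
move=> /and3P[h1 _ /forallP H1] /and3P[h2 _ /forallP H2].
apply/eqP; apply/negPn/negP => hne.
have := H1 m'; rewrite h2 eq_sym hne /= => a.
have := H2 m; rewrite h1 hne /= => b.
by have := ltn_trans a b; rewrite ltnn.
Qed.

Lemma Aeq2 n (j m : 'I_n.+1) pi : (0 < j)%N ->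
  Aj j m pi = Bj j pi && (m == am j pi).
Proof.
move=> j0; apply/idP/andP.
  move=> hA; have hb : Bj j pi by case/and3P: hA.
  split => //; apply/eqP; exact: A_uniq hA (am_spec j0 hb).
by case=> hb /eqP ->; apply: am_spec.
Qed.

Lemma sum_eq1 (T : finType) (P : pred T) (x : T) :
  \sum_(m | P m) ((m == x) : nat) = P x.
Proof.
case Px: (P x).
  rewrite (bigD1 x) //= eqxx big1 // => m /andP[_ /negbTE ->]; by [].
by rewrite big1 // => m Pm; case: eqP => // e; rewrite -e Pm in Px.
Qed.

Lemma Lk n (j : 'I_n.+1) (k : nat) : (0 < j)%N ->
  \sum_(m : 'I_n.+1 | (m < k)%N) cnt (Aj j m) =
  cnt (fun pi => Bj j pi && (am j pi < k)%N).
Proof.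
move=> j0; rewrite /cnt exchange_big; apply: eq_bigr => pi _ /=.
under eq_bigr => m _ do rewrite Aeq2 //.
case: (Bj j pi) => /=; last by rewrite big1.
exact: (sum_eq1 (fun m : 'I_n.+1 => (m < k)%N)).
Qed.

Lemma const_sum n (k : nat) (c : nat) : (k <= n.+1)%N ->
  \sum_(m : 'I_n.+1 | (m < k)%N) c = (k * c)%N.
Proof.
move=> hk; rewrite -(big_ord_widen _ (fun _ => c) hk).
by rewrite big_const_ord iter_addn_0 mulnC.
Qed.

Lemma am_lt n (j : 'I_n.+1) pi : (0 < j)%N -> (am j pi < j)%N.
Proof.
move=> j0; rewrite /am.
by case: (@arg_maxnP _ (ord0 : 'I_n.+1) (fun i : 'I_n.+1 => (i < j)%N) (fun i => nat_of_ord (pi i)) j0).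
Qed.

Lemma K1 n (j : 'I_n.+1) : (0 < j)%N -> cnt (Bj j) = (j * cnt (Aj j ord0))%N.
Proof.
move=> j0.
have -> : cnt (Bj j) = cnt (fun pi => Bj j pi && (am j pi < j)%N).
  by apply: eq_bigr => pi _; rewrite am_lt ?andbT.
rewrite -Lk //.
rewrite (eq_bigr (fun _ => cnt (Aj j ord0))); last by move=> m hm; apply: L2.
by rewrite const_sum // ltnW.
Qed.

Lemma ord_neq m (a b : 'I_m) : (a < b)%N -> (a == b) = false.
Proof. by move=> h; apply/eqP => e; rewrite e ltnn in h. Qed.

Lemma W n (r : nat) (j : 'I_n.+1) pi : (1 <= r)%N -> Bj j pi ->
  r_winnable r pi = (r <= j)%N && (am j pi < r)%N.
Proof.
move=> r1 hb; apply/existsP/andP.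
  case=> j' /and4P[hrj hltr /forallP hno /eqP hv].
  have ej : j' = j.
    apply: (@perm_inj _ pi); rewrite (eqP hb); exact: val_inj.
  subst j'.
  have j0 : (0 < j)%N by exact: leq_trans hrj.
  have /and3P[hm _ /forallP Ha] := am_spec j0 hb.
  split => //; rewrite ltnNge; apply/negP => hrm.
  have := hno (am j pi); rewrite hrm hm /= => /negP; apply.
  apply/forallP => i; apply/implyP => him.
  have := Ha i; rewrite (ltn_trans him hm) /=.
  by rewrite (ord_neq him) /=.
case=> hrj hm; exists j; rewrite hrj /=.
have j0 : (0 < j)%N by exact: leq_trans hrj.
have /and3P[hmj _ /forallP Ha] := am_spec j0 hb.
apply/and3P; split.
- apply/forallP => i; apply/implyP => hi; rewrite (eqP hb) /=.
  rewrite ltn_neqAle -ltnS ltn_ord andbT.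
  have : pi i != pi j by rewrite (inj_eq perm_inj) (ord_neq hi).
  by rewrite (eqP hb) -val_eqE.
- apply/forallP => k; apply/implyP => /andP[hrk hkj].
  apply/negP => /forallP /(_ (am j pi)) /implyP.
  have hmk : (am j pi < k)%N by exact: leq_trans hm hrk.
  move=> /(_ hmk) a.
  have := Ha k; rewrite hkj /=.
  have -> : k != am j pi by rewrite eq_sym (ord_neq hmk).
  by move=> /= b; have := ltn_trans a b; rewrite ltnn.
- by rewrite (eqP hb).
Qed.

Lemma W0 n (pi : 'S_n.+1) : r_winnable 0 pi = Bj ord0 pi.
Proof.
apply/existsP/idP.
  case=> j /and4P[_ _ /forallP hno hv].
  move/eqP: hv => hv.
  case: (ltnP 0 j) => hj.
    move: (hno ord0) => /implyP /(_ hj) /negP; case.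
    by apply/forallP => i.
  have ej : j = ord0 by apply: val_inj; apply/eqP; rewrite /= -leqn0.
  by rewrite ej in hv; apply/eqP; apply: val_inj.
move=> hb; exists ord0; apply/and4P; split => //.
- by apply/forallP => i.
- by apply/forallP => k; rewrite ltn0 andbF.
Qed.

Lemma K2 n (r : nat) (j : 'I_n.+1) : (1 <= r)%N -> (r <= j)%N ->
  cnt (fun pi => r_winnable r pi && Bj j pi) = (r * cnt (Aj j ord0))%N.
Proof.
move=> r1 hrj.
have j0 : (0 < j)%N by exact: leq_trans hrj.
have -> : cnt (fun pi => r_winnable r pi && Bj j pi) =
          cnt (fun pi => Bj j pi && (am j pi < r)%N).
  apply: eq_bigr => pi _ /=.
  case hb: (Bj j pi); last by rewrite andbF.
  by rewrite (W r1 hb) hrj andbT.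
rewrite -Lk //.
rewrite (eq_bigr (fun _ => cnt (Aj j ord0))); last first.
  by move=> m hm; apply: L2 => //; exact: leq_trans hm hrj.
by rewrite const_sum // (leq_trans hrj) // ltnW.
Qed.

Lemma K3 n (r : nat) (j : 'I_n.+1) : (1 <= r)%N -> (j < r)%N ->
  cnt (fun pi => r_winnable r pi && Bj j pi) = 0%N.
Proof.
move=> r1 hjr; apply: big1 => pi _.
case hb: (Bj j pi); last by rewrite andbF.
by rewrite (W r1 hb) leqNgt hjr.
Qed.

Lemma posE n (pi : 'S_n.+1) (j : 'I_n.+1) :
  (((pi^-1)%g ord_max) == j) = Bj j pi.
Proof.
rewrite /Bj; apply/eqP/eqP => [<-|<-]; by rewrite ?permKV ?permK.
Qed.

Local Open Scope ring_scope.

Lemma decomp (R : ringType) (theta : R) n (P : pred 'S_n.+1) :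
  \sum_(pi | P pi) weight theta pi =
  \sum_(j : 'I_n.+1) theta ^+ j * (cnt (fun pi => P pi && Bj j pi))%:R.
Proof.
rewrite (partition_big (fun pi : 'S_n.+1 => (pi^-1)%g ord_max) predT) //=.
apply: eq_bigr => j _.
rewrite /cnt natr_sum mulr_sumr big_mkcond /=.
apply: eq_bigr => pi _; rewrite posE.
case: (P pi) => /=; last by rewrite mulr0.
case hb: (Bj j pi); last by rewrite mulr0.
by rewrite mulr1 /weight (eqP (etrans (posE pi j) hb)).
Qed.

Lemma c_pos n : (0 < cnt (Bj (ord0 : 'I_n.+1)))%N.
Proof.
rewrite /cnt (bigD1 (tperm ord0 ord_max)) //= /Bj tpermL eqxx.
by [].
Qed.
Unset Implicit Arguments. Set Strict Implicit. Unset Printing Implicit Defensive.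
Local Open Scope ring_scope.

Theorem theorem2p3 (R : realFieldType) (theta : R) (n : nat) :
  0 < theta -> theta != 1 ->
  (forall r : nat, (1 <= r)%N -> (r <= n)%N ->
     win_prob theta n r =
       r%:R * (1 - theta) * (\sum_(r <= i < n.+1) theta ^+ i / i%:R)
         / (1 - theta ^+ n.+1))
  /\ win_prob theta n 0 = (1 - theta) / (1 - theta ^+ n.+1).
Proof.
move=> th0 th1.
have cj : forall j : 'I_n.+1, cnt (Bj j) = cnt (Bj (ord0 : 'I_n.+1)).
  by move=> j; apply: L1.
have hD : \sum_(s : 'S_n.+1) weight theta s =
    (cnt (Bj (ord0 : 'I_n.+1)))%:R * \sum_(j < n.+1) theta ^+ j.
  rewrite (decomp theta (fun _ => true)) mulr_sumr; apply: eq_bigr => j _.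
  have -> : cnt (fun pi => true && Bj j pi) = cnt (Bj (ord0 : 'I_n.+1)).
    by rewrite -(cj j).
  by rewrite mulrC.
have geo : (1 - theta) * \sum_(j < n.+1) theta ^+ j = 1 - theta ^+ n.+1.
  by rewrite -[1 - theta ^+ _]opprB subrX1 -mulNr opprB.
have hN : 1 - theta ^+ n.+1 != 0.
  by rewrite subr_eq0 eq_sym pexpr_eq1 // ltW.
have h1 : 1 - theta != 0 by rewrite subr_eq0 eq_sym.
have hc : (cnt (Bj (ord0 : 'I_n.+1)))%:R != 0 :> R.
  by rewrite pnatr_eq0 -lt0n c_pos.
have hS : \sum_(j < n.+1) theta ^+ j != 0.
  by apply/eqP => e; move: hN; rewrite -geo e mulr0 eqxx.
split.
  move=> r r1 rn.
  rewrite /win_prob /fprob -mulr_suml decomp hD.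
  have hnum : \sum_(j < n.+1) theta ^+ j *
        (cnt (fun pi => r_winnable r pi && Bj j pi))%:R =
      r%:R * (cnt (Bj (ord0 : 'I_n.+1)))%:R *
        \sum_(r <= i < n.+1) theta ^+ i / i%:R.
    rewrite big_geq_mkord mulr_sumr [RHS]big_mkcond; apply: eq_bigr => j _ /=.
    case: (leqP r j) => hrj.
      have j0 : (0 < j)%N by exact: leq_trans hrj.
      rewrite K2 // natrM -(cj j) K1 // natrM.
      have hj : (nat_of_ord j)%:R != 0 :> R by rewrite pnatr_eq0 -lt0n.
      by field.
    by rewrite K3 // mulr0.
  rewrite hnum -geo.
  by field; rewrite hc hS h1.
rewrite /win_prob /fprob -mulr_suml decomp hD.
rewrite (bigD1 ord0) //= big1 => [|j hj].
  have -> : cnt (fun pi => r_winnable 0 pi && Bj (ord0 : 'I_n.+1) pi) =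
            cnt (Bj (ord0 : 'I_n.+1)).
    by rewrite /cnt; apply: eq_bigr => pi _; rewrite W0 andbb.
  rewrite -geo expr0 mul1r addr0.
  by field; rewrite hc hS h1.
have -> : cnt (fun pi => r_winnable 0 pi && Bj j pi) = 0%N.
  rewrite /cnt; apply: big1 => pi _; rewrite W0 /Bj.
  case: eqP => // e0; case: eqP => // ej.
  by move: hj; rewrite -(perm_inj (etrans e0 (esym ej))) eqxx.
by rewrite mulr0.
Qed.
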